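(* Let $m\ge2$, $n=2m+1$, and consider $$(P):\ \sup\ x_m\ \text{ s.t. }\ x_1(E_1+E_{m+1})+\sum_{i=2}^{m-1}x_i(E_i+E_{m+i}+E_{i-1,n}+E_{m+i-1,n})+x_m(E_m-E_{2m}+E_{m-1,n}+E_{2m-1,n})\preceq I_{m+1}\oplus0_m,$$ with dual $(D)$. Then $\operatorname{val}(P)=0<\operatorname{val}(D)=1$.
   Context: $E_{ij}\in\mathcal S^n$ is the symmetric matrix whose only nonzero entries are $1$ in positions $(i,j)$ and $(j,i)$; $E_i:=E_{ii}$. For $(P)$: $\sup\{c^Tx:\sum_ix_iA_i\preceq B\}$ the dual is $(D)$: $\inf\{B\bullet Y:A_i\bullet Y=c_i\ \forall i,\ Y\succeq0\}$, $S\bullet T=\operatorname{trace}(ST)$. *)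

(* Defs.v *)
From HB Require Import structures.
From mathcomp Require Import all_boot all_order all_algebra.
Set Implicit Arguments. Unset Strict Implicit. Unset Printing Implicit Defensive.
Import Order.TTheory GRing.Theory Num.Theory.
Local Open Scope ring_scope.

(* E_{ij} in S^n, with 1-based indices i j (as in the paper):
   entries 1 at positions (i,j) and (j,i), 0 elsewhere.  E_i := E_{ii}. *)
Definition Esym (R : pzRingType) (n i j : nat) : 'M[R]_n :=
  \matrix_(k < n, l < n)
    (if ((k.+1 == i) && (l.+1 == j)) || ((k.+1 == j) && (l.+1 == i)) then 1 else 0).

Definition psd (R : numDomainType) (n : nat) (A : 'M[R]_n) : Prop :=
  A^T = A /\ forall v : 'cV[R]_n, 0 <= (v^T *m A *m v) 0 0.

Definition loewner_le (R : numDomainType) (n : nat) (A B : 'M[R]_n) : Prop :=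
  psd (B - A).

Definition frob (R : pzRingType) (n : nat) (S T : 'M[R]_n) : R := \tr (S *m T).

(* The constraint matrices A_i (1-based i, 1 <= i <= m) in S^(2m+1), n = 2m+1. *)
Definition Amat (R : pzRingType) (m i : nat) : 'M[R]_(2 * m + 1) :=
  let n := (2 * m + 1)%N in
  if i == 1%N then Esym R n 1 1 + Esym R n (m + 1) (m + 1)
  else if i == m then
    Esym R n m m - Esym R n (2 * m) (2 * m) + Esym R n (m - 1) n
    + Esym R n (2 * m - 1) n
  else
    Esym R n i i + Esym R n (m + i) (m + i) + Esym R n (i - 1) n
    + Esym R n (m + i - 1) n.

Definition Bmat (R : pzRingType) (m : nat) : 'M[R]_(2 * m + 1) :=
  \matrix_(k < 2 * m + 1, l < 2 * m + 1) (if (k == l) && (k < m + 1)%N then 1 else 0).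

Definition cvec (R : pzRingType) (m i : nat) : R := if i == m then 1 else 0.

(* Primal feasibility: sum_i x_i A_i ⪯ B;  x is indexed by 'I_m, x_(i+1) := x i 0. *)
Definition primal_feasible (R : numDomainType) (m : nat) (x : 'cV[R]_m) : Prop :=
  loewner_le (\sum_(i < m) x i 0 *: Amat R m i.+1) (Bmat R m).

Definition primal_obj (R : pzRingType) (m : nat) (x : 'cV[R]_m) : R :=
  \sum_(i < m) cvec R m i.+1 * x i 0.

Definition dual_feasible (R : numDomainType) (m : nat) (Y : 'M[R]_(2 * m + 1)) : Prop :=
  (forall i : 'I_m, frob (Amat R m i.+1) Y = cvec R m i.+1) /\ psd Y.

Definition is_sup (R : numDomainType) (S : R -> Prop) (s : R) : Prop :=
  (forall y, S y -> y <= s) /\ (forall u, (forall y, S y -> y <= u) -> s <= u).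

Definition is_inf (R : numDomainType) (S : R -> Prop) (s : R) : Prop :=
  (forall y, S y -> s <= y) /\ (forall u, (forall y, S y -> u <= y) -> u <= s).

(* Main.v *)
Require Import Defs.
From HB Require Import structures.
From mathcomp Require Import all_boot all_order all_algebra.
From mathcomp Require Import zify ring lra.
Import Order.TTheory GRing.Theory Num.Theory.
Local Open Scope ring_scope.

Lemma bil (R : comNzRingType) n (S : 'M[R]_n) (p q : 'I_n) :
  ((delta_mx p (0:'I_1))^T *m S *m delta_mx q (0:'I_1)) 0 0 = S p q.
Proof. by rewrite trmx_delta -rowE -colE !mxE. Qed.

Lemma bilM (R : comNzRingType) n (S : 'M[R]_n) (p q : 'I_n) :
  ((delta_mx p (0:'I_1))^T *m S *m delta_mx q (0:'I_1)) = (S p q)%:M.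
Proof. by apply/matrixP => i j; rewrite !ord1 bil mxE /= mulr1n. Qed.

Lemma quad2 (R : comNzRingType) n (S : 'M[R]_n) (p q : 'I_n) (t : R) :
  let v := t *: delta_mx p (0:'I_1) + delta_mx q (0:'I_1) in (v^T *m S *m v) 0 0
  = t * t * S p p + t * S p q + t * S q p + S q q.
Proof.
move=> /=.
have -> : (t *: delta_mx p (0:'I_1) + delta_mx q (0:'I_1))^T = t *: (delta_mx p (0:'I_1))^T + (delta_mx q (0:'I_1))^T.
  by rewrite raddfD /= linearZ.
rewrite !mulmxDr !mulmxDl -!scalemxAr -!scalemxAl.
rewrite !bilM !mxE /=; ring.
Qed.

Lemma psd_diag (R : realFieldType) n (S : 'M[R]_n) p : psd S -> 0 <= S p p.
Proof. move=> [_ H]; have := H (delta_mx p 0); by rewrite bil. Qed.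

Lemma psd_zero (R : realFieldType) n (S : 'M[R]_n) (p q : 'I_n) :
  psd S -> S q q = 0 -> S p q = 0 /\ S q p = 0.
Proof.
move=> [Hs H] Hq.
have Hpq : S q p = S p q by rewrite -{1}Hs mxE.
set a := S p p; set b := S p q.
set s := (`|a| + 1)^-1.
have s0 : 0 < s by rewrite invr_gt0; have := normr_ge0 a; lra.
have as1 : a * s < 1.
  rewrite /s ltr_pdivrMr; last by have := normr_ge0 a; lra.
  have := ler_norm a; lra.
have := H (((- b) * s) *: delta_mx p (0:'I_1) + delta_mx q (0:'I_1)).
rewrite quad2 Hq Hpq -/a -/b => h.
have k : 0 <= b * b * s by rewrite mulr_ge0 ?sqr_ge0 // ltW.
have e : (- b * s) * (- b * s) * a + (- b * s) * b + (- b * s) * b + 0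
   = b * b * s * (a * s) - 2 * (b * b * s) by ring.
rewrite e in h.
have k2 : b * b * s * (a * s) <= b * b * s by rewrite ler_piMr // ltW.
have k3 : b * b * s <= 0 by lra.
have k4 : b * b <= 0.
  by rewrite -(pmulr_lle0 _ s0).
have: b = 0 by nra.
by move=> ->.
Qed.

Lemma tr_delta (R : comNzRingType) n (a b : 'I_n) (Y : 'M[R]_n) :
  \tr (delta_mx a b *m Y) = Y b a.
Proof.
rewrite /mxtrace (bigD1 a) //= big1 ?addr0.
- rewrite mxE (bigD1 b) //= big1 ?addr0; first by rewrite mxE !eqxx mul1r.
  by move=> d hd; rewrite mxE (negbTE hd) andbF mul0r.
- by move=> c hc; rewrite mxE big1 // => d _; rewrite mxE (negbTE hc) mul0r.
Qed.

Lemma tr_deltar (R : comNzRingType) n (a b : 'I_n) (Y : 'M[R]_n) :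
  \tr (Y *m delta_mx a b) = Y b a.
Proof. by rewrite mxtrace_mulC tr_delta. Qed.

Lemma Esym_delta (R : comNzRingType) n (a b : 'I_n) i j : i = a.+1 -> j = b.+1 ->
  Esym R n i j = if a == b then delta_mx a a else delta_mx a b + delta_mx b a.
Proof.
move=> -> ->; apply/matrixP => k l; rewrite /Esym !mxE !eqSS.
have E : forall (x y : 'I_n), (nat_of_ord x == nat_of_ord y) = (x == y) by [].
rewrite !E.
case: (a =P b) => [->|/eqP hab].
  by rewrite orbb !mxE; case: (_ && _).
have hba : (b == a) = false by rewrite eq_sym; apply/negbTE.
move/negbTE: hab => hab.
rewrite !mxE.
case: (k =P a) => [?|?]; case: (l =P b) => [?|?]; case: (k =P b) => [?|?]; case: (l =P a) => [?|?];
  subst => //=; rewrite ?hab ?hba ?eqxx /= ?addr0 ?add0r //;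
  try (by move/eqP: hab); try (by move/eqP: hba).
Qed.

Lemma frobD (R : pzRingType) n (A B Y : 'M[R]_n) : frob (A + B) Y = frob A Y + frob B Y.
Proof. by rewrite /frob mulmxDl mxtraceD. Qed.
Lemma frobB (R : pzRingType) n (A B Y : 'M[R]_n) : frob (A - B) Y = frob A Y - frob B Y.
Proof. by rewrite /frob mulmxBl linearB. Qed.

Lemma frobN (R : pzRingType) n (A Y : 'M[R]_n) : frob (- A) Y = - frob A Y.
Proof. by rewrite /frob mulNmx linearN. Qed.

Lemma frob_Esym (R : comNzRingType) n (a b : 'I_n) i j (Y : 'M[R]_n) : i = a.+1 -> j = b.+1 ->
  frob (Esym R n i j) Y = if a == b then Y a a else Y a b + Y b a.
Proof.
move=> hi hj; rewrite (@Esym_delta R n a b i j hi hj) /frob; case: (a == b); first by rewrite tr_delta.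
by rewrite mulmxDl mxtraceD !tr_delta addrC.
Qed.

Lemma frob_delta (R : comNzRingType) n (p : 'I_n) (M : 'M[R]_n) :
  frob M (delta_mx p p) = M p p.
Proof. by rewrite /frob tr_deltar. Qed.

Ltac dec := repeat match goal with |- context [(?x == ?y)%N] =>
  let H := fresh in case: (x =P y) => H; try (exfalso; lia) end.

Section Ent.
Variable R : comNzRingType.
Variable m : nat.
Hypothesis hm : (2 <= m)%N.

Lemma A_last i (h : (2 * m < 2 * m+1)%N) : (1 <= i <= m)%N ->
  Amat R m i (Ordinal h) (Ordinal h) = 0.
Proof.
move=> /andP [h1 h2]; rewrite /Amat /=; dec; rewrite !mxE /=; dec; rewrite /=; ring.
Qed.

Lemma A_pm i (h : (2 * m < 2 * m+1)%N) (h' : (m - 2 < 2 * m+1)%N) : (1 <= i <= m)%N ->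
  Amat R m i (Ordinal h') (Ordinal h) = if i == m then 1 else 0.
Proof.
move=> /andP [h1 h2]; rewrite /Amat /=; dec; rewrite !mxE /=; dec; rewrite /=; ring.
Qed.

Lemma A_mm i (h' : (m - 1 < 2 * m+1)%N) : (1 <= i <= m)%N ->
  Amat R m i (Ordinal h') (Ordinal h') = if i == m then 1 else 0.
Proof.
move=> /andP [h1 h2]; rewrite /Amat /=; dec; rewrite !mxE /=; dec; rewrite /=; ring.
Qed.
End Ent.
Lemma pos21 m : (0 < 2 * m + 1)%N. Proof. by rewrite addn1. Qed.
Definition ob (m k : nat) : 'I_(2 * m + 1) := Ordinal (ltn_pmod k (pos21 m)).
Lemma ob_val m k : (k < 2 * m + 1)%N -> nat_of_ord (ob m k) = k.
Proof. by move=> h; rewrite /= modn_small. Qed.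
Lemma ob_eq m a b : (a < 2 * m + 1)%N -> (b < 2 * m + 1)%N -> (ob m a == ob m b) = (a == b).
Proof. by move=> ha hb; rewrite -val_eqE /= !modn_small. Qed.

Section Main.
Variable R : rcfType.
Variable m : nat.
Hypothesis hm : (2 <= m)%N.

Lemma S_entry (x : 'cV[R]_m) k l :
  (Bmat R m - \sum_(i<m) x i 0 *: Amat R m i.+1) k l
  = Bmat R m k l - \sum_(i<m) x i 0 * Amat R m i.+1 k l.
Proof.
rewrite !mxE summxE; congr (_ - _); apply eq_bigr => i _; by rewrite mxE.
Qed.

Lemma sum_pick (f : 'I_m -> R) (h : (m - 1 < m)%N) :
  \sum_(i<m) f i * (if i.+1 == m then 1 else 0) = f (Ordinal h).
Proof.
rewrite (bigD1 (Ordinal h)) //= big1 ?addr0.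
  have -> : ((m - 1).+1 == m) = true by apply/eqP; lia.
  by rewrite mulr1.
move=> i hi; have -> : (i.+1 == m) = false; last by rewrite mulr0.
apply/negP => /eqP e; move/negP: hi; apply; rewrite -val_eqE /=; apply/eqP; lia.
Qed.


Lemma ob_ord k (h : (k < 2 * m + 1)%N) : ob m k = Ordinal h.
Proof. by apply/val_inj; rewrite /= modn_small. Qed.

Lemma B_entry a b : (a < 2 * m + 1)%N -> (b < 2 * m + 1)%N ->
  Bmat R m (ob m a) (ob m b) = if (a == b) && (a < m + 1)%N then 1 else 0.
Proof. by move=> ha hb; rewrite mxE ob_eq // ob_val. Qed.

Lemma primal_bound (x : 'cV[R]_m) : primal_feasible x -> primal_obj x = 0.
Proof.
move=> hp.
have h2 : (2 * m < 2 * m + 1)%N by lia.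
have h3 : (m - 2 < 2 * m + 1)%N by lia.
have h1 : (m - 1 < m)%N by lia.
have hq : (Bmat R m - \sum_(i<m) x i 0 *: Amat R m i.+1) (ob m (2 * m)%N) (ob m (2 * m)%N) = 0.
  rewrite S_entry B_entry //.
  have -> : (2 * m < m + 1)%N = false by lia.
  rewrite andbF big1 ?subr0 // => i _.
  by rewrite ob_ord A_last ?mulr0 //; apply/andP; split => //; apply: ltn_ord.
have [hpq _] := @psd_zero R _ _ (ob m (m - 2)%N) _ hp hq.
rewrite S_entry B_entry // in hpq.
have e : (m - 2 == 2 * m)%N = false by lia.
rewrite e /= in hpq.
have E : \sum_(i < m) x i 0 * Amat R m i.+1 (ob m (m - 2)%N) (ob m (2 * m)%N)
   = \sum_(i < m) x i 0 * (if i.+1 == m then 1 else 0).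
  apply eq_bigr => i _; rewrite (ob_ord _ h2) (ob_ord _ h3) A_pm //.
  by apply/andP; split => //; apply: ltn_ord.
rewrite E sum_pick in hpq.
rewrite /primal_obj /cvec.
under eq_bigr => i _ do rewrite mulrC.
rewrite sum_pick; lra.
Qed.

Lemma psd_B : psd (Bmat R m).
Proof.
split.
  by apply/matrixP => k l; rewrite !mxE eq_sym; case: eqP => // ->.
move=> v; rewrite mxE; apply: sumr_ge0 => d _.
have -> : (v^T *m Bmat R m) 0 d = if (d < m + 1)%N then v d 0 else 0.
  rewrite mxE (bigD1 d) //= big1 ?addr0.
    by rewrite !mxE eqxx /=; case: ifP => _; rewrite ?mulr1 ?mulr0.
  by move=> c hc; rewrite !mxE (negbTE hc) /= mulr0.
by case: ifP => _; [rewrite -expr2 sqr_ge0 | rewrite mul0r].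
Qed.

Lemma zero_feas : primal_feasible (0 : 'cV[R]_m).
Proof.
rewrite /primal_feasible /loewner_le.
have -> : \sum_(i < m) (0 : 'cV[R]_m) i 0 *: Amat R m i.+1 = 0.
  by apply: big1 => i _; rewrite mxE scale0r.
by rewrite subr0; exact: psd_B.
Qed.

Lemma fE (Y : 'M[R]_(2 * m + 1)) a b i j : (a < 2 * m + 1)%N -> (b < 2 * m + 1)%N ->
  i = a.+1 -> j = b.+1 ->
  frob (Esym R (2 * m + 1)%N i j) Y =
  if (a == b)%N then Y (ob m a) (ob m a) else Y (ob m a) (ob m b) + Y (ob m b) (ob m a).
Proof.
move=> ha hb hi hj; rewrite (@frob_Esym R _ (ob m a) (ob m b) i j Y) ?ob_val // ob_eq //.
Qed.

Lemma frob_B_ge (Y : 'M[R]_(2 * m + 1)) : psd Y ->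
  Y (ob m (m - 1)%N) (ob m (m - 1)%N) <= frob (Bmat R m) Y.
Proof.
move=> hY.
have -> : frob (Bmat R m) Y = \sum_(c : 'I_(2 * m + 1)) (if (c < m + 1)%N then Y c c else 0).
  rewrite /frob /mxtrace; apply: eq_bigr => c _.
  rewrite mxE (bigD1 c) //= big1 ?addr0.
    by rewrite !mxE eqxx /=; case: ifP => _; rewrite ?mul1r ?mul0r.
  by move=> d hd; rewrite !mxE eq_sym (negbTE hd) /= mul0r.
rewrite (bigD1 (ob m (m - 1)%N)) //= modn_small; last by lia.
have -> : (m - 1 < m + 1)%N = true by lia.
rewrite lerDl; apply: sumr_ge0 => c _; case: ifP => _ //; exact: psd_diag.
Qed.

Lemma dual_lb (Y : 'M[R]_(2 * m + 1)) : dual_feasible Y -> 1 <= frob (Bmat R m) Y.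
Proof.
move=> [hc0 hY].
have hc : forall i : 'I_m, frob (Amat R m i.+1) Y = cvec R m i.+1 := hc0.
have hs : forall a b, Y a b = Y b a by move=> a b; rewrite -{1}hY.1 mxE.
have hd : forall a, 0 <= Y a a by move=> a; exact: psd_diag.
have P : forall k, (k < m - 1)%N ->
   Y (ob m k) (ob m k) = 0 /\ Y (ob m (m + k)%N) (ob m (m + k)%N) = 0.
  elim => [|k IH] hk.
    have hk0 : (0 < m)%N by lia.
    have := hc (Ordinal hk0); rewrite /Amat /cvec /= !frobD.
    rewrite (@fE Y 0 0 1 1); try lia.
    rewrite (@fE Y (m + 0)%N (m + 0)%N (m + 1)%N (m + 1)%N); try lia.
    rewrite !eqxx.
    have -> : (1 == m)%N = false by lia.
    move=> h; have := hd (ob m 0); have := hd (ob m (m + 0)%N); split; lra.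
  have [IH1 IH2] := IH (ltnW hk).
  have hk0 : (k.+1 < m)%N by lia.
  have := hc (Ordinal hk0); rewrite /Amat /cvec /=.
  have -> : (k.+2 == m)%N = false by lia.
  rewrite !frobD.
  rewrite (@fE Y k.+1 k.+1 k.+2 k.+2); try lia.
  rewrite (@fE Y (m + k.+1)%N (m + k.+1)%N (m + k.+2)%N (m + k.+2)%N); try lia.
  rewrite (@fE Y k (2 * m)%N (k.+2 - 1)%N (2 * m + 1)%N); try lia.
  rewrite (@fE Y (m + k)%N (2 * m)%N (m + k.+2 - 1)%N (2 * m + 1)%N); try lia.
  have -> : (k == 2 * m)%N = false by lia.
  have -> : (m + k == 2 * m)%N = false by lia.
  rewrite !eqxx.
  have [z1 z2] := @psd_zero R _ Y (ob m (2 * m)%N) _ hY IH1.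
  have [z3 z4] := @psd_zero R _ Y (ob m (2 * m)%N) _ hY IH2.
  rewrite z1 z2 z3 z4 => h.
  have := hd (ob m k.+1); have := hd (ob m (m + k.+1)%N); split; lra.
have [Z1 Z2] := P (m - 2)%N ltac:(lia).
have hk0 : (m - 1 < m)%N by lia.
have := hc (Ordinal hk0); rewrite /Amat /cvec /=.
have -> : ((m - 1).+1 == 1)%N = false by lia.
have -> : ((m - 1).+1 == m)%N = true by lia.
rewrite !frobD frobN.
rewrite (@fE Y (m - 1)%N (m - 1)%N m m); try lia.
rewrite (@fE Y (2 * m - 1)%N (2 * m - 1)%N (2 * m)%N (2 * m)%N); try lia.
rewrite (@fE Y (m - 2)%N (2 * m)%N (m - 1)%N (2 * m + 1)%N); try lia.
rewrite (@fE Y (2 * m - 2)%N (2 * m)%N (2 * m - 1)%N (2 * m + 1)%N); try lia.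
have -> : (m - 2 == 2 * m)%N = false by lia.
have -> : (2 * m - 2 == 2 * m)%N = false by lia.
rewrite !eqxx.
have e : (m + (m - 2) = 2 * m - 2)%N by lia.
rewrite e in Z2.
have [z1 z2] := @psd_zero R _ Y (ob m (2 * m)%N) _ hY Z1.
have [z3 z4] := @psd_zero R _ Y (ob m (2 * m)%N) _ hY Z2.
rewrite z1 z2 z3 z4 => h.
have := frob_B_ge Y hY; have := hd (ob m (2 * m - 1)%N); lra.
Qed.

Lemma Y0_feas : dual_feasible (delta_mx (ob m (m - 1)%N) (ob m (m - 1)%N) : 'M[R]_(2 * m + 1)).
Proof.
have h' : (m - 1 < 2 * m + 1)%N by lia.
split.
  move=> i; rewrite frob_delta (ob_ord _ h') A_mm //.
  by apply/andP; split => //; apply: ltn_ord.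
split; first by rewrite trmx_delta.
move=> v; rewrite mxE; apply: sumr_ge0 => d _.
have -> : (v^T *m delta_mx (ob m (m - 1)%N) (ob m (m - 1)%N)) 0 d
    = if d == ob m (m - 1)%N then v d 0 else 0.
  rewrite mxE (bigD1 d) //= big1 ?addr0.
    by rewrite !mxE andbb; case: (_ == _); rewrite ?mulr1 ?mulr0.
  move=> c hc; rewrite !mxE; case: (c =P _) => [e|_]; last by rewrite /= mulr0.
  case: (d =P _) => [e2|_]; last by rewrite /= mulr0.
  by move/eqP: hc; rewrite e e2.
by case: ifP => _; [rewrite -expr2 sqr_ge0 | rewrite mul0r].
Qed.

Lemma Y0_val : frob (Bmat R m) (delta_mx (ob m (m - 1)%N) (ob m (m - 1)%N)) = 1.
Proof.
rewrite frob_delta B_entry ?eqxx /=; try lia.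
by have -> : (m - 1 < m + 1)%N = true by lia.
Qed.
End Main.

Theorem mainTheorem8 (R : rcfType) (m : nat) (hm : (2 <= m)%N) :
  is_sup (fun v : R => exists x : 'cV[R]_m, primal_feasible x /\ v = primal_obj x) 0
  /\ is_inf (fun v : R => exists Y : 'M[R]_(2 * m + 1),
                dual_feasible Y /\ v = frob (Bmat R m) Y) 1
  /\ (0 : R) < 1.
Proof.
split; [split|split; [split|exact: ltr01]].
- by move=> y [x [hx ->]]; rewrite (@primal_bound R m hm _ hx).
- move=> u hu; apply: hu; exists 0; split; first exact: zero_feas.
  by rewrite (@primal_bound R m hm _ (zero_feas R m)).
- by move=> y [Y [hY ->]]; exact: (@dual_lb R m hm _ hY).
- move=> u hu; rewrite -(@Y0_val R m hm); apply: hu.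
  by exists (delta_mx (ob m (m - 1)%N) (ob m (m - 1)%N)); split => //; exact: (@Y0_feas R m hm).
Qed.
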